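(* Let $X=(X_n)_{n\in\mathbb{Z}}$ be a stationary sequence of integer-valued random variables. If almost surely $0$ has infinitely many ancestors in the record graph of $X$, then the record graph of $X$ is almost surely connected.
   Context: For a sequence $x=(x_n)_{n\in\mathbb{Z}}$, the record map is $R_x(i)=\inf\{n>i: \sum_{l=i}^{n-1}x_l\ge0\}$ if this set is nonempty, and $R_x(i)=i$ otherwise. The record graph has vertex set $\mathbb{Z}$ and a directed edge $i\to R_x(i)$ whenever $R_x(i)\ne i$; connectivity is in the undirected sense. An ancestor of order $n\ge1$ of $i$ is $R_x^n(i)$ when $R_x^n(i)\neq i$; ''infinitely many ancestors'' means $R^n_x(i)\ne i$ for all $n\ge1$ (equivalently $R^{n+1}_x(i)>R^n_x(i)$ for all $n\ge 0$). *)

(* Defs.v *)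
From HB Require Import structures.
From mathcomp Require Import all_boot all_order all_algebra.
From mathcomp Require Import all_classical all_reals all_analysis.
From Stdlib Require Import Relations.
Set Implicit Arguments. Unset Strict Implicit. Unset Printing Implicit Defensive.
Import Order.TTheory GRing.Theory Num.Theory.
Local Open Scope ring_scope.
Local Open Scope classical_set_scope.

(* Record map R_x(i) = inf { m > i : sum_{l=i}^{m-1} x_l >= 0 }, or i if empty.
   Writing m = i + n + 1 with n : nat, the condition is
   0 <= \sum_(l < n.+1) x (i + l). *)
Definition record_map (x : int -> int) (i : int) : int :=
  match pselect (exists n : nat, (0 <= \sum_(l < n.+1) x (i + (l : nat)%:Z))%R) with
  | left H => i + (ex_minn H).+1%:Z
  | right _ => i
  end.

Definition record_edge (x : int -> int) (u v : int) : Prop :=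
  u <> v /\ record_map x u = v.

Definition record_graph_connected (x : int -> int) : Prop :=
  forall u v : int, clos_refl_sym_trans int (record_edge x) u v.

(* i has infinitely many ancestors: R_x^n(i) <> i for all n >= 1. *)
Definition inf_ancestors (x : int -> int) (i : int) : Prop :=
  forall n : nat, (1 <= n)%N -> iter n (record_map x) i <> i.

Definition stationary d (T : measurableType d) (R : realType)
  (P : probability T R) (X : int -> T -> int) : Prop :=
  forall (s : seq (int * int)) (k : int),
    P [set w | all (fun p => X (p.1 + k) w == p.2) s]
    = P [set w | all (fun p => X p.1 w == p.2) s].

(* Main.v *)
Require Import Defs.
From HB Require Import structures.
From mathcomp Require Import all_boot all_order all_algebra.
From mathcomp Require Import all_classical all_reals all_analysis.
From Stdlib Require Import Relations.
Import Order.TTheory GRing.Theory Num.Theory.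
Local Open Scope ring_scope.
Local Open Scope classical_set_scope.
From mathcomp Require Import zify.
Definition Ssum (x : int -> int) (i : int) (n : nat) : int :=
  \sum_(l < n) x (i + (l : nat)%:Z).
Definition dead (x : int -> int) (b : int) := forall n : nat, Ssum x b n.+1 < 0.

Lemma rm_dead x b : dead x b -> record_map x b = b.
Proof.
move=> hd; rewrite /record_map; case: pselect => [H|//]; exfalso.
case: H => n hn; have := hd n; by rewrite ltNge -/(Ssum x b n.+1) hn.
Qed.

Lemma rm_spec x i : ~ dead x i -> exists m : nat,
  [/\ record_map x i = i + m.+1%:Z, 0 <= Ssum x i m.+1 &
      forall k, (k < m)%N -> Ssum x i k.+1 < 0].
Proof.
move=> nd; rewrite /record_map; case: pselect => [H|H]; last first.
  exfalso; apply: nd => n; rewrite ltNge; apply/negP => h; apply: H; by exists n.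
case: ex_minnP => m Pm minm; exists m; split => // k km.
rewrite ltNge; apply/negP => hk; have := minm k hk; by rewrite leqNgt km.
Qed.

Lemma S_add x i p q : Ssum x i (p + q) = Ssum x i p + Ssum x (i + p%:Z) q.
Proof.
rewrite /Ssum big_split_ord /=; congr (_ + _); apply: eq_bigr => l _ /=.
by rewrite PoszD addrA.
Qed.

Lemma nest x a m p : record_map x a = a + m.+1%:Z -> 0 <= Ssum x a m.+1 ->
  (forall k, (k < m)%N -> Ssum x a k.+1 < 0) -> (0 < p <= m)%N ->
  exists m' : nat, record_map x (a + p%:Z) = a + p%:Z + m'.+1%:Z /\ (p + m' <= m)%N.
Proof.
move=> e h0 hk /andP[p0 pm].
have hs := S_add x a p (m.+1 - p).
rewrite subnKC in hs; last by lia.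
have hp : Ssum x a p < 0.
  have -> : p = p.-1.+1 by lia.
  apply: hk; lia.
rewrite (_ : (m.+1 - p = (m - p).+1)%N) in hs; last by lia.
have hj : 0 <= Ssum x (a + p%:Z) (m - p).+1 by lia.
have nd : ~ dead x (a + p%:Z) by move=> hd; have := hd (m - p)%N; rewrite ltNge hj.
case: (rm_spec _ _ nd) => m' [e' h1 h2]; exists m'; split => //.
have : ~~ (m - p < m')%N.
  apply/negP => hlt; have := h2 _ hlt; by rewrite ltNge hj.
lia.
Qed.
Section conn.
Variable x : int -> int.
Hypothesis nd : forall b, ~ dead x b.
Local Notation R := (record_map x).
Local Notation conn := (clos_refl_sym_trans int (record_edge x)).

Lemma rm_gt b : b < R b.
Proof. case: (rm_spec _ _ (nd b)) => m [-> _ _]; lia. Qed.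

Lemma conn_edge b : conn b (R b).
Proof.
apply: rst_step; split => // e; have := rm_gt b; rewrite -e ltxx //.
Qed.

Lemma connA a : forall n : nat, forall j, a < j < R a -> R a - j <= n%:Z -> conn j (R a).
Proof.
case: (rm_spec _ _ (nd a)) => m [e h0 hk].
elim => [|n IH] j /andP[aj jR] hn; first lia.
have [p hp] : exists p : nat, j = a + p%:Z by exists (absz (j - a)); lia.
have hpm : (0 < p <= m)%N by lia.
case: (nest _ _ _ _ e h0 hk hpm) => m' [e' hm'].
rewrite -hp in e'.
case: (eqVneq (R j) (R a)) => hj.
  rewrite -hj; exact: conn_edge.
apply: rst_trans (conn_edge j) _.
apply: IH; last lia.
apply/andP; split; first lia.
rewrite lt_neqAle hj /=; lia.
Qed.

Lemma connB u : forall k : nat, forall v, u <= v <= iter k R u -> conn u v.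
Proof.
elim => [|k IH] v /andP[uv vk].
  have -> : v = u by rewrite /= in vk; lia.
  exact: rst_refl.
rewrite iterS in vk.
set a := iter k R u in IH vk.
have ua : u <= a.
  rewrite /a; clear -nd; elim: k => [|k IH] //=; apply: le_trans IH _; apply: ltW; apply: rm_gt.
case: (lerP v a) => va; first by apply: IH; rewrite uv va.
have ca : conn u a by apply: IH; rewrite ua lexx.
case: (eqVneq v (R a)) => vR.
  by rewrite vR; apply: rst_trans ca (conn_edge a).
apply: rst_trans ca _; apply: rst_trans (conn_edge a) _; apply: rst_sym.
apply: (connA a (absz (R a - v))); last lia.
rewrite va /= lt_neqAle vR vk //.
Qed.

Lemma iter_ge u k : u + k%:Z <= iter k R u.
Proof.
elim: k => [|k IH] /=; first lia.
have := rm_gt (iter k R u); lia.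
Qed.

Lemma connected_all : record_graph_connected x.
Proof.
have H u v : u <= v -> conn u v.
  move=> uv; apply: (connB u (absz (v - u))); rewrite uv /=.
  have := iter_ge u (absz (v - u)); lia.
move=> u v; case: (lerP u v) => uv; first exact: H.
apply: rst_sym; apply: H; exact: ltW.
Qed.
End conn.

Section meas.
Variables (d : measure_display) (T : measurableType d) (R : realType)
  (P : probability T R) (X : int -> T -> int).
Hypothesis hX : forall (n k : int), measurable (X n @^-1` [set k]).
Hypothesis hstat : stationary P X.

Definition vals b n w := [seq X ((i:nat)%:Z + b) w | i <- iota 0 n].
Definition ptset b (t : seq int) := [set w | all (fun p : int * int => X (p.1 + b) w == p.2)
   (zip [seq (i:nat)%:Z | i <- iota 0 (size t)] t)].

Lemma all_zipE b w s t : size s = size t ->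
  all (fun p : int * int => X (p.1 + b) w == p.2) (zip [seq (i:nat)%:Z | i <- s] t)
  = ([seq X ((i:nat)%:Z + b) w | i <- s] == t).
Proof.
elim: s t => [|i s IH] [|y t] //= [hs]; by rewrite IH // eqseq_cons.
Qed.

Lemma ptsetE b t w : ptset b t w <-> vals b (size t) w = t.
Proof.
rewrite /ptset /vals /= all_zipE ?size_map ?size_iota //; split => [/eqP|->] //.
Qed.

Lemma mall b q : measurable [set w | all (fun p : int * int => X (p.1 + b) w == p.2) q].
Proof.
elim: q => [|[a k] q IH] /=.
  have -> : [set w : T | true] = setT by apply/seteqP; split.
  exact: measurableT.
have -> : [set w | (X (a + b) w == k) && all (fun p : int * int => X (p.1 + b) w == p.2) q]
   = X (a + b) @^-1` [set k] `&` [set w | all (fun p : int * int => X (p.1 + b) w == p.2) q].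
  apply/seteqP; split => w /=.
    by move/andP=> [/eqP -> h]; split.
  by case=> /= -> h; rewrite eqxx.
exact: measurableI (hX _ _) IH.
Qed.

Definition Fj b n (Q : pred (seq int)) (j : nat) : set T :=
  match pickle_inv (T:=seq int) j with
  | Some t => if (size t == n) && Q t then ptset b t else set0
  | None => set0 end.

Definition cyl b n (Q : pred (seq int)) := [set w | Q (vals b n w)].

Lemma cylE b n Q : cyl b n Q = \bigcup_j Fj b n Q j.
Proof.
apply/seteqP; split => w.
  move=> hQ; exists (pickle (vals b n w)) => //.
  rewrite /Fj pickleK_inv size_map size_iota eqxx hQ /=.
  by apply/ptsetE; rewrite size_map size_iota.
case=> j _; rewrite /Fj; case: pickle_inv => [t|//].
case: ifPn => [/andP[/eqP hn hQ]|//] /ptsetE; rewrite hn => vt.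
by rewrite /cyl /= vt.
Qed.

Lemma mFj b n Q j : measurable (Fj b n Q j).
Proof.
rewrite /Fj; case: pickle_inv => [t|]; last exact: measurable0.
case: ifP => _; [exact: mall | exact: measurable0].
Qed.

Lemma trivFj b n Q : trivIset setT (Fj b n Q).
Proof.
move=> i j _ _ [w [hi hj]]; move: hi hj; rewrite /Fj.
case ei: (pickle_inv i) => [t|] //; case: ifP => [/andP[/eqP ht _]|] // /ptsetE.
rewrite ht => vt.
case ej: (pickle_inv j) => [t'|] //; case: ifP => [/andP[/eqP ht' _]|] // /ptsetE.
rewrite ht' => vt'.
have hi' := pickle_invK (T:=seq int) i; rewrite ei /= in hi'.
have hj' := pickle_invK (T:=seq int) j; rewrite ej /= in hj'.
by rewrite -hi' -hj' -vt -vt'.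
Qed.

Lemma Pcyl b n Q : P (cyl b n Q) = P (cyl 0 n Q).
Proof.
rewrite !cylE !(measure_bigcup P) //; try (by move=> *; exact: mFj);
  try exact: trivFj.
apply: eq_eseriesr => j _; rewrite /Fj; case: pickle_inv => [t|//]; case: ifP => // _.
exact: (etrans (hstat _ b) (esym (hstat _ 0))).
Qed.

Definition QN (N : nat) : pred (seq int) :=
  fun t => all (fun m => \sum_(l < m.+1) nth 0 t l < 0) (iota 0 N.+1).
Definition Cs b N := cyl b N.+1 (QN N).
Definition Ds b := \bigcap_N Cs b N.

Lemma nth_vals b n w l : (l < n)%N -> nth 0 (vals b n w) l = X (b + l%:Z) w.
Proof.
by move=> ln; rewrite /vals (nth_map 0%N) ?size_iota // nth_iota // add0n addrC.
Qed.

Lemma CsE b N w : Cs b N w <-> forall m, (m <= N)%N -> Ssum (fun n => X n w) b m.+1 < 0.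
Proof.
have E m : (m <= N)%N -> \sum_(l < m.+1) nth 0 (vals b N.+1 w) l
    = Ssum (fun n => X n w) b m.+1.
  move=> mN; apply: eq_bigr => l _; rewrite nth_vals //; have := ltn_ord l; lia.
rewrite /Cs /cyl /QN; split.
  move=> /allP h m mN; have := h m; rewrite mem_iota /= add0n ltnS mN => /(_ isT).
  by rewrite E.
move=> h; apply/allP => m; rewrite mem_iota add0n ltnS => /andP[_ mN].
rewrite E //; exact: h.
Qed.

Lemma DsE b w : Ds b w <-> dead (fun n => X n w) b.
Proof.
split.
  by move=> h n; have /CsE := h n I; apply.
by move=> h N _; apply/CsE => m _; exact: h.
Qed.

Lemma mCs b N : measurable (Cs b N).
Proof. rewrite /Cs cylE; apply: bigcup_measurable => j _; exact: mFj. Qed.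

Lemma mDs b : measurable (Ds b).
Proof. apply: bigcapT_measurable => N; exact: mCs. Qed.

Lemma PDs b : P (Ds b) = P (Ds 0).
Proof.
have h c : P \o Cs c @ \oo --> P (Ds c).
  apply: nonincreasing_cvg_mu.
  - apply: le_lt_trans (probability_le1 _ (mCs c 0)) _; exact: ltey.
  - exact: mCs.
  - exact: mDs.
  - move=> n m nm; rewrite subsetEset => w /CsE hw; apply/CsE => k km.
    apply: hw; exact: leq_trans km nm.
have e : P \o Cs b = P \o Cs 0 by apply/funext => N; rewrite /= /Cs Pcyl.
have h0 := h 0; rewrite -e in h0.
exact: (cvg_unique (@ereal_hausdorff R) (h b) h0).
Qed.

End meas.

Theorem lemma3p4 (d : measure_display) (T : measurableType d) (R : realType)
  (P : probability T R) (X : int -> T -> int)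
  (hX : forall (n k : int), measurable (X n @^-1` [set k]))
  (hstat : stationary P X)
  (hanc : {ae P, forall w, inf_ancestors (fun n => X n w) 0}) :
  {ae P, forall w, record_graph_connected (fun n => X n w)}.
Proof.
have D0 : P (Ds _ _ X 0) = 0.
  case: hanc => N [mN PN sub]; apply/eqP; rewrite -measure_le0 -PN.
  apply: le_measure; rewrite ?inE //; first exact: (mDs _ _ X hX).
  move=> w /(DsE _ _ X) hd; apply: sub => hinf.
  exact: (hinf 1%N isT (rm_dead _ _ hd)).
have ngl b : P.-negligible (Ds _ _ X b).
  apply/(negligibleP _ (mDs _ _ X hX b)); exact: (etrans (PDs _ _ _ P X hX hstat b) D0).
have [M [mM PM sM]] := negligible_bigcup
  (fun k : nat => negligibleU (ngl k%:Z) (ngl (- k%:Z))).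
exists M; split => // w hw; apply: sM.
case: (pselect (exists b, dead (fun n => X n w) b)) => [[b hb]|hnd].
  exists (absz b) => //; case: (lerP 0 b) => hb0.
    by left; apply/(DsE _ _ X); rewrite gez0_abs.
  by right; apply/(DsE _ _ X); rewrite ltz0_abs // opprK.
exfalso; apply: hw; apply: connected_all => b hb; apply: hnd; by exists b.
Qed.
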